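(* Let $k\in\{3,4\}$. On $\Gamma_{k+2}\setminus\Omega$ the following hold, with constants independent of $N$, $\lambda$ and the frequencies: (1) $|M_{k+2}|\lesssim m(\xi_1^* )^2|\xi_1^*||\xi_3^*|^2$; (2) if moreover $|\xi_1^*|\sim|\xi_2^*|\gtrsim N\gg|\xi_3^*|\sim|\xi_4^*|$, then $|M_{k+2}|\lesssim|\xi_3^*||\xi_4^*||\xi_5^*|$; (3) if moreover $|\xi_4^*|\gg|\xi_5^*|$, then $|M_{k+2}|\lesssim m(\xi_1^* )^2|\xi_1^*|^2|\xi_5^*|$.
   Context: Fix $k\in\{3,4\}$, $s\in[\tfrac12,1)$, a large parameter $N\ge1$ and a period $\lambda\ge1$. The frequency variables range over $\frac1\lambda\mathbb Z$. The multiplier $m=m_{N,s}:\mathbb R\to(0,1]$ is a smooth even function, nonincreasing in $|\xi|$, with $m(\xi)=1$ for $|\xi|\le N$ and $m(\xi)=N^{1-s}|\xi|^{s-1}$ for $|\xi|>2N$. For $n\ge2$, $\Gamma_n=\{(\xi_1,\dots,\xi_n)\in(\frac1\lambda\mathbb Z)^n:\xi_1+\dots+\xi_n=0\}$. Write $m_j=m(\xi_j)$, $\alpha_n=\xi_1^3+\dots+\xi_n^3$, $M_{k+2}=i(m_1^2\xi_1^3+\dots+m_{k+2}^2\xi_{k+2}^3)$. For a tuple of frequencies, $\xi_1^*,\xi_2^*,\dots$ denotes its rearrangement with $|\xi_1^*|\ge|\xi_2^*|\ge\cdots$; when $k=3$ set $\xi_6^*=0$. Notation: $A\lesssim B$ means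 $A\le CB$ with $C$ independent of $N,\lambda$ and the frequencies; $A\sim B$ means $A\lesssim B\lesssim A$; $A\ll B$ (or $B\gg A$) means $A\le C_0^{-1}B$ for a fixed sufficiently large absolute constant $C_0$. The non-resonant set is $\Omega=\Omega_1\cup\Omega_2\cup\Omega_3\cup\Omega_4\subset\Gamma_{k+2}$, where $\Omega_1=\{|\xi_3^*|\gg|\xi_4^*|\}$; $\Omega_2=\{|\xi_1^*|\sim|\xi_2^*|\gtrsim N\gg|\xi_3^*|\sim|\xi_4^*|,\ |{\xi_1^*}^3+{\xi_2^*}^3|\gg|{\xi_3^*}^3+\dots+{\xi_{k+2}^*}^3|\}$; $\Omega_3=\{|\xi_1^*|\gg|\xi_3^*|,\ |\xi_1^*+\xi_2^*||\xi_1^*|\gg|\xi_3^*|^2\}$; $\Omega_4=\{|\xi_4^*|\gg|\xi_5^*|,\ |\xi_1^*+\xi_2^*||\xi_1^*+\xi_3^*||\xi_1^*+\xi_4^*|\gg|\xi_5^*||\xi_1^*|^2,\ |m(\xi_1^* )^2{\xi_1^*}^3+\dots+m(\xi_4^* )^2{\xi_4^*}^3|\gg|m(\xi_5^* )^2{\xi_5^*}^3+m(\xi_6^* )^2{\xi_6^*}^3|\}$ (each set consisting of the points of $\Gamma_{k+2}$ satisfying the listed conditions). *)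

(* Defs.v *)
From Stdlib Require Import Reals Lra Lia ZArith.
Open Scope R_scope.

Fixpoint sumR (n : nat) (f : nat -> R) : R :=
  match n with
  | O => 0
  | S n' => sumR n' f + f n'
  end.

Definition smooth (f : R -> R) : Prop :=
  exists D : nat -> R -> R,
    D O = f /\ forall (j : nat) (x : R), derivable_pt_lim (D j) x (D (S j) x).

Definition profile (s : R) (phi : R -> R) : Prop :=
  smooth phi /\
  (forall x, phi (- x) = phi x) /\
  (forall x y, Rabs x <= Rabs y -> phi y <= phi x) /\
  (forall x, Rabs x <= 1 -> phi x = 1) /\
  (forall x, 2 < Rabs x -> phi x = Rpower (Rabs x) (s - 1)).

(* The multiplier m_{N,s}(xi) = phi(xi/N); it equals 1 for |xi| <= N and
   N^(1-s) |xi|^(s-1) for |xi| > 2N. *)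
Definition mult (phi : R -> R) (N x : R) : R := phi (x / N).

(* Frequency tuples (xi_1,...,xi_n) are encoded as xi : nat -> R, xi j being
   the (j+1)-th frequency, j < n.  Gamma_n with frequencies in (1/lam) Z. *)
Definition in_Gamma (n : nat) (lam : R) (xi : nat -> R) : Prop :=
  (forall j, (j < n)%nat -> exists z : Z, xi j = IZR z / lam) /\
  sumR n xi = 0.

Definition sorting_perm (n : nat) (xi : nat -> R) (p : nat -> nat) : Prop :=
  (forall i, (i < n)%nat -> (p i < n)%nat) /\
  (forall i j, (i < n)%nat -> (j < n)%nat -> p i = p j -> i = j) /\
  (forall i j, (i <= j)%nat -> (j < n)%nat -> Rabs (xi (p j)) <= Rabs (xi (p i))).

(* xstar n xi p j = xi_j^* (1-based), and 0 for j outside 1..n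
   (so xi_6^* = 0 when n = 5). *)
Definition xstar (n : nat) (xi : nat -> R) (p : nat -> nat) (j : nat) : R :=
  if andb (Nat.leb 1 j) (Nat.leb j n) then xi (p (j - 1)%nat) else 0.

(* |M_{n}| / with M_n = i * sum_j m_j^2 xi_j^3 : we record the real sum. *)
Definition Msum (phi : R -> R) (N : R) (n : nat) (xi : nat -> R) : R :=
  sumR n (fun j => (mult phi N (xi j)) ^ 2 * (xi j) ^ 3).

(* Asymptotic notation with explicit constants:
   A << B  (i.e. B >> A)  :=  A <= B / C0     (C0 the fixed large constant)
   A ~ B                  :=  A <= K B and B <= K A
   A <~ B                 :=  A <= K B                                     *)
Definition ll (C0 A B : R) : Prop := A <= B / C0.
Definition sim (K A B : R) : Prop := A <= K * B /\ B <= K * A.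
Definition lsim (K A B : R) : Prop := A <= K * B.

Section Omegas.
Variables (phi : R -> R) (N K C0 : R) (n : nat) (xi : nat -> R) (p : nat -> nat).
Let X j := xstar n xi p j.
Let a j := Rabs (X j).
Let mm j := mult phi N (X j).

Definition Omega1 : Prop := ll C0 (a 4%nat) (a 3%nat).

Definition Omega2 : Prop :=
  sim K (a 1%nat) (a 2%nat) /\ lsim K N (a 2%nat) /\ ll C0 (a 3%nat) N /\
  sim K (a 3%nat) (a 4%nat) /\
  ll C0 (Rabs (sumR (n - 2) (fun j => X (j + 3)%nat ^ 3)))
        (Rabs (X 1%nat ^ 3 + X 2%nat ^ 3)).

Definition Omega3 : Prop :=
  ll C0 (a 3%nat) (a 1%nat) /\
  ll C0 (a 3%nat ^ 2) (Rabs (X 1%nat + X 2%nat) * a 1%nat).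

Definition Omega4 : Prop :=
  ll C0 (a 5%nat) (a 4%nat) /\
  ll C0 (a 5%nat * a 1%nat ^ 2)
        (Rabs (X 1%nat + X 2%nat) * Rabs (X 1%nat + X 3%nat) * Rabs (X 1%nat + X 4%nat)) /\
  ll C0 (Rabs (mm 5%nat ^ 2 * X 5%nat ^ 3 + mm 6%nat ^ 2 * X 6%nat ^ 3))
        (Rabs (mm 1%nat ^ 2 * X 1%nat ^ 3 + mm 2%nat ^ 2 * X 2%nat ^ 3 +
               mm 3%nat ^ 2 * X 3%nat ^ 3 + mm 4%nat ^ 2 * X 4%nat ^ 3)).

Definition Omega : Prop := Omega1 \/ Omega2 \/ Omega3 \/ Omega4.
End Omegas.

(* Main.v *)
Require Import Defs.
From Stdlib Require Import Reals Lra Lia Psatz ZArith List Permutation Classical.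
Open Scope R_scope.

Section PhiFacts.
Variables (s : R) (phi : R -> R).
Hypothesis Hs : 1/2 <= s < 1.
Hypothesis Hp : profile s phi.

Lemma phi_even y : phi (- y) = phi y.
Proof. destruct Hp as (_&H&_). apply H. Qed.

Lemma phi_abs y : phi (Rabs y) = phi y.
Proof. unfold Rabs; destruct (Rcase_abs y); [apply phi_even|reflexivity]. Qed.

Lemma phi_mono y z : Rabs y <= Rabs z -> phi z <= phi y.
Proof. destruct Hp as (_&_&H&_). apply H. Qed.

Lemma phi_big y : 2 < Rabs y -> phi y = Rpower (Rabs y) (s - 1).
Proof. destruct Hp as (_&_&_&_&H). apply H. Qed.

Lemma phi_pos y : 0 < phi y.
Proof.
  assert (H: phi (Rabs y + 3) <= phi y) by (apply phi_mono;
    rewrite (Rabs_pos_eq (Rabs y + 3)); pose proof (Rabs_pos y); lra).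
  rewrite phi_big in H. unfold Rpower in H. pose proof (exp_pos ((s-1) * ln (Rabs (Rabs y + 3)))). lra.
  pose proof (Rabs_pos y). rewrite Rabs_pos_eq; lra.
Qed.

Lemma phi_le1 y : phi y <= 1.
Proof.
  destruct Hp as (_&_&_&H&_). rewrite <- (H 0) by (rewrite Rabs_R0; lra).
  apply phi_mono. rewrite Rabs_R0. apply Rabs_pos.
Qed.

Lemma phi_half y : Rabs y <= 4 -> 1/2 <= phi y.
Proof.
  intro Hy. assert (H: phi 4 <= phi y) by (apply phi_mono; rewrite (Rabs_pos_eq 4); lra).
  rewrite (phi_big 4) in H; [|rewrite Rabs_pos_eq; lra].
  rewrite Rabs_pos_eq in H; [|lra].
  assert (H2: Rpower 4 (- / 2) <= Rpower 4 (s - 1)) by (apply Rle_Rpower; lra).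
  rewrite Rpower_Ropp, Rpower_sqrt in H2 by lra.
  assert (E: sqrt 4 = 2) by (rewrite <- (sqrt_square 2) by lra; f_equal; lra).
  rewrite E in H2. lra.
Qed.

Lemma pow_big y : 1 <= y -> 1 <= Rpower y (2 * s - 1).
Proof. intro. rewrite <- (Rpower_O y) at 1 by lra. apply Rle_Rpower; lra. Qed.

Lemma phi_sq_big y : 2 < Rabs y -> phi y ^ 2 * Rabs y = Rpower (Rabs y) (2 * s - 1).
Proof.
  intro H. rewrite phi_big by lra.
  replace (2 * s - 1) with ((s - 1) + (s - 1) + 1) by ring.
  rewrite !Rpower_plus, Rpower_1 by lra. ring.
Qed.

Lemma mono8 y z : Rabs y <= Rabs z -> phi y ^ 2 * Rabs y <= 8 * (phi z ^ 2 * Rabs z).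
Proof.
  intro H. pose proof (phi_pos y). pose proof (phi_le1 y). pose proof (phi_pos z).
  pose proof (Rabs_pos y).
  assert (Hy2: phi y ^ 2 <= 1) by nra.
  destruct (Rle_lt_dec (Rabs z) 4) as [Hz|Hz].
  - pose proof (phi_half z Hz). assert (1/4 <= phi z ^ 2) by nra.
    assert (phi y ^ 2 * Rabs y <= Rabs y) by nra.
    assert (Rabs z <= 4 * (phi z ^ 2 * Rabs z)) by nra. lra.
  - rewrite (phi_sq_big z) by lra. pose proof (pow_big (Rabs z) ltac:(lra)).
    destruct (Rle_lt_dec (Rabs y) 4) as [Hy|Hy].
    + assert (phi y ^ 2 * Rabs y <= Rabs y) by nra. lra.
    + rewrite (phi_sq_big y) by lra.
      assert (Rpower (Rabs y) (2*s-1) <= Rpower (Rabs z) (2*s-1)) by (apply Rle_Rpower_l; lra).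
      pose proof (pow_big (Rabs y) ltac:(lra)). lra.
Qed.

End PhiFacts.
Lemma dlim_loc f g x l a : a < x -> (forall t, a < t -> f t = g t) ->
  derivable_pt_lim g x l -> derivable_pt_lim f x l.
Proof.
  intros Ha Heq Hg eps Heps. destruct (Hg eps Heps) as [d Hd].
  assert (Hp: 0 < Rmin d (x - a)) by (apply Rmin_pos; [apply cond_pos|lra]).
  exists (mkposreal _ Hp). intros h hne hlt. simpl in hlt.
  rewrite !Heq. apply Hd; auto. eapply Rlt_le_trans; [exact hlt|apply Rmin_l].
  lra. assert (Rabs h < x - a) by (eapply Rlt_le_trans; [exact hlt|apply Rmin_r]).
  pose proof (Rabs_def2 _ _ H). lra.
Qed.

Lemma dlim_glob f g x l : (forall t, f t = g t) ->
  derivable_pt_lim g x l -> derivable_pt_lim f x l.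
Proof. intros. apply (dlim_loc f g x l (x - 1)); auto; lra. Qed.

Lemma dmul f g x a b : derivable_pt_lim f x a -> derivable_pt_lim g x b ->
  derivable_pt_lim (fun t => f t * g t) x (a * g x + f x * b).
Proof. intros. apply (derivable_pt_lim_mult f g x a b); auto. Qed.

Lemma dplus f g x a b : derivable_pt_lim f x a -> derivable_pt_lim g x b ->
  derivable_pt_lim (fun t => f t + g t) x (a + b).
Proof. intros. apply (derivable_pt_lim_plus f g x a b); auto. Qed.

Lemma dminus f g x a b : derivable_pt_lim f x a -> derivable_pt_lim g x b ->
  derivable_pt_lim (fun t => f t - g t) x (a - b).
Proof. intros. apply (derivable_pt_lim_minus f g x a b); auto. Qed.

Lemma dconst c x : derivable_pt_lim (fun _ => c) x 0.
Proof. apply (derivable_pt_lim_const c x). Qed.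

Lemma did x : derivable_pt_lim (fun t => t) x 1.
Proof. apply derivable_pt_lim_id. Qed.

Lemma dscal c f x l : derivable_pt_lim f x l -> derivable_pt_lim (fun t => c * f t) x (c * l).
Proof. intros. apply (derivable_pt_lim_scal f c x l); auto. Qed.

Lemma dneg f x l : derivable_pt_lim f (- x) l -> derivable_pt_lim (fun t => f (- t)) x (- l).
Proof.
  intros H.
  assert (H1: derivable_pt_lim (fun t => - t) x (-1)).
  { apply (derivable_pt_lim_opp id x 1). apply derivable_pt_lim_id. }
  pose proof (derivable_pt_lim_comp (fun t => - t) f x (-1) l H1) as H2.
  replace (- l) with (l * -1) by ring. apply H2. exact H.
Qed.

Lemma Rabs_le_inv x a : Rabs x <= a -> - a <= x <= a.
Proof. unfold Rabs; destruct (Rcase_abs x); lra. Qed.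

Lemma cont_bound f : (forall c, continuity_pt f c) ->
  exists B, 0 <= B /\ forall y, Rabs y <= 4 -> Rabs (f y) <= B.
Proof.
  intros Hc.
  destruct (continuity_ab_maj f (-4) 4 ltac:(lra) (fun c _ => Hc c)) as [Mx [HM _]].
  destruct (continuity_ab_min f (-4) 4 ltac:(lra) (fun c _ => Hc c)) as [mx [Hm _]].
  exists (Rmax (Rabs (f Mx)) (Rabs (f mx))). split.
  - eapply Rle_trans; [apply Rabs_pos|apply Rmax_l].
  - intros y Hy. pose proof (Rabs_le_inv _ _ Hy) as Hy2. clear Hy. rename Hy2 into Hy. specialize (HM y ltac:(lra)). specialize (Hm y ltac:(lra)).
    apply Rabs_le. pose proof (Rmax_l (Rabs (f Mx)) (Rabs (f mx))).
    pose proof (Rmax_r (Rabs (f Mx)) (Rabs (f mx))).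
    pose proof (Rle_abs (f Mx)). pose proof (Rle_abs (- f mx)); rewrite Rabs_Ropp in *. lra.
Qed.

Section Deriv.
Variables (s : R) (phi : R -> R) (D : nat -> R -> R).
Hypothesis Hs : 1/2 <= s < 1.
Hypothesis Hp : profile s phi.
Hypothesis HD0 : D O = phi.
Hypothesis HD : forall j x, derivable_pt_lim (D j) x (D (S j) x).

Lemma dphi y : derivable_pt_lim phi y (D 1%nat y).
Proof. rewrite <- HD0. apply HD. Qed.

Lemma Dcont j c : continuity_pt (D j) c.
Proof. apply derivable_continuous_pt. exists (D (S j) c). apply HD. Qed.

Lemma D1_odd y : D 1%nat y = - D 1%nat (- y).
Proof.
  apply (uniqueness_limite phi y). apply dphi.
  apply (dlim_glob phi (fun t => phi (- t))).
  intro t. symmetry. apply (phi_even s phi Hp).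
  apply dneg. apply dphi.
Qed.

Lemma D2_even y : D 2%nat y = D 2%nat (- y).
Proof.
  apply (uniqueness_limite (D 1%nat) y). apply HD.
  apply (dlim_glob (D 1%nat) (fun t => -1 * D 1%nat (- t))).
  intro t. rewrite D1_odd at 1. ring.
  replace (D 2%nat (- y)) with (-1 * - D 2%nat (- y)) by ring.
  apply dscal. apply dneg. apply HD.
Qed.

Lemma D1_big y : 2 < y -> D 1%nat y = (s-1) * Rpower y (s-1-1).
Proof.
  intro Hy. apply (uniqueness_limite phi y). apply dphi.
  apply (dlim_loc phi (fun t => Rpower t (s-1)) y _ 2 Hy).
  intros t Ht. rewrite (phi_big s phi Hp) by (rewrite Rabs_pos_eq; lra).
  rewrite Rabs_pos_eq by lra. reflexivity.
  apply derivable_pt_lim_power. lra.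
Qed.

Lemma D2_big y : 2 < y -> D 2%nat y = (s-1) * ((s-1-1) * Rpower y (s-1-1-1)).
Proof.
  intro Hy. apply (uniqueness_limite (D 1%nat) y). apply HD.
  apply (dlim_loc (D 1%nat) (fun t => (s-1) * Rpower t (s-1-1)) y _ 2 Hy).
  intros t Ht. apply D1_big; lra.
  apply dscal. apply derivable_pt_lim_power. lra.
Qed.

Lemma pow_shift y e : 0 < y -> Rpower y (e - 1) * y = Rpower y e.
Proof.
  intro. transitivity (Rpower y (e-1) * Rpower y 1).
  rewrite Rpower_1 by lra; reflexivity. rewrite <- Rpower_plus. f_equal. ring.
Qed.

Lemma Rpower_pos y e : 0 < Rpower y e.
Proof. unfold Rpower. apply exp_pos. Qed.

Lemma D1_big_bound y : 2 < Rabs y -> Rabs (D 1%nat y) * Rabs y <= phi y.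
Proof.
  assert (K: forall y, 2 < y -> Rabs (D 1%nat y) * Rabs y <= phi y).
  { intros z Hz. rewrite D1_big by lra. rewrite (phi_big s phi Hp) by (rewrite Rabs_pos_eq; lra).
    rewrite !(Rabs_pos_eq z) by lra. rewrite Rabs_mult, (Rabs_pos_eq (Rpower _ _)) by (left; apply Rpower_pos).
    rewrite Rmult_assoc, pow_shift by lra. rewrite Rabs_left1 by lra.
    pose proof (Rpower_pos z (s-1)). nra. }
  intro Hy. unfold Rabs in Hy. destruct (Rcase_abs y).
  - rewrite D1_odd, Rabs_Ropp, <- (phi_even s phi Hp y). rewrite <- (Rabs_Ropp y). apply K. lra.
  - apply K. lra.
Qed.

Lemma D2_big_bound y : 2 < Rabs y -> Rabs (D 2%nat y) * y ^ 2 <= 2 * phi y.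
Proof.
  assert (K: forall y, 2 < y -> Rabs (D 2%nat y) * y ^ 2 <= 2 * phi y).
  { intros z Hz. rewrite D2_big by lra. rewrite (phi_big s phi Hp) by (rewrite Rabs_pos_eq; lra).
    rewrite !(Rabs_pos_eq z) by lra.
    replace ((s - 1) * ((s - 1 - 1) * Rpower z (s - 1 - 1 - 1)))
      with (((s - 1) * (s - 1 - 1)) * Rpower z (s - 1 - 1 - 1)) by ring.
    rewrite Rabs_mult, (Rabs_pos_eq (Rpower _ _)) by (left; apply Rpower_pos).
    replace (Rabs ((s - 1) * (s - 1 - 1)) * Rpower z (s - 1 - 1 - 1) * z ^ 2)
      with (Rabs ((s - 1) * (s - 1 - 1)) * ((Rpower z (s - 1 - 1 - 1) * z) * z)) by ring.
    rewrite !pow_shift by lra.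
    assert (E0: 0 <= (s-1)*(s-1-1)) by (replace ((s-1)*(s-1-1)) with ((1-s)*(2-s)) by ring; apply Rmult_le_pos; lra).
    rewrite (Rabs_pos_eq _ E0).
    pose proof (Rpower_pos z (s-1)). assert ((s-1)*(s-1-1) <= 2) by nra. nra. }
  intro Hy. unfold Rabs in Hy. destruct (Rcase_abs y).
  - rewrite D2_even, <- (phi_even s phi Hp y). replace (y ^ 2) with ((-y)^2) by ring. apply K. lra.
  - apply K. lra.
Qed.

Lemma D1_bound : exists c1, 0 <= c1 /\ forall y, Rabs (D 1%nat y) * Rabs y <= c1 * phi y.
Proof.
  destruct (cont_bound (D 1%nat) (Dcont 1)) as [B [HB0 HB]].
  exists (8 * B + 1). split. lra. intro y. pose proof (phi_pos s phi Hp y).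
  destruct (Rle_lt_dec (Rabs y) 4) as [Hy4|Hy4].
  - pose proof (HB y Hy4). pose proof (phi_half s phi Hs Hp y Hy4). pose proof (Rabs_pos y).
    pose proof (Rabs_pos (D 1%nat y)).
    assert (Rabs (D 1%nat y) * Rabs y <= B * 4) by (apply Rmult_le_compat; lra). nra.
  - pose proof (D1_big_bound y ltac:(lra)). nra.
Qed.

Lemma D2_bound : exists c2, 0 <= c2 /\ forall y, Rabs (D 2%nat y) * y ^ 2 <= c2 * phi y.
Proof.
  destruct (cont_bound (D 2%nat) (Dcont 2)) as [B [HB0 HB]].
  exists (32 * B + 2). split. lra. intro y. pose proof (phi_pos s phi Hp y).
  destruct (Rle_lt_dec (Rabs y) 4) as [Hy4|Hy4].
  - pose proof (HB y Hy4). pose proof (phi_half s phi Hs Hp y Hy4). pose proof (Rabs_pos y).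
    pose proof (Rabs_pos (D 2%nat y)).
    assert (y ^ 2 <= 16). { rewrite <- pow2_abs. nra. }
    assert (Rabs (D 2%nat y) * y ^ 2 <= B * 16) by (apply Rmult_le_compat; nra). nra.
  - pose proof (D2_big_bound y ltac:(lra)). nra.
Qed.

End Deriv.

Lemma dlim_val f x l l' : derivable_pt_lim f x l -> l = l' -> derivable_pt_lim f x l'.
Proof. intros H ->; exact H. Qed.

Lemma MVT_gen f f' a b : (forall c, derivable_pt_lim f c (f' c)) ->
  exists c, Rmin a b <= c <= Rmax a b /\ f b - f a = f' c * (b - a).
Proof.
  intros Hd. destruct (Rtotal_order a b) as [H|[H|H]].
  - destruct (MVT_cor2 f f' a b H (fun c _ => Hd c)) as [c [E Hc]].
    exists c. rewrite Rmin_left, Rmax_right by lra. split; [lra|exact E].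
  - subst. exists b. rewrite Rmin_left, Rmax_left by lra. split; [lra|ring].
  - destruct (MVT_cor2 f f' b a H (fun c _ => Hd c)) as [c [E Hc]].
    exists c. rewrite Rmin_right, Rmax_left by lra. split; [lra|]. 
    replace (f b - f a) with (- (f a - f b)) by ring. rewrite E. ring.
Qed.

Lemma between_abs a b c R : Rmin a b <= c <= Rmax a b -> Rabs a <= R -> Rabs b <= R -> Rabs c <= R.
Proof.
  intros [H1 H2] Ha Hb. apply Rabs_le_inv in Ha. apply Rabs_le_inv in Hb.
  apply Rabs_le. unfold Rmin, Rmax in *. destruct (Rle_dec a b); lra.
Qed.

Section GBounds.
Variables (s : R) (phi : R -> R) (D : nat -> R -> R).
Hypothesis Hs : 1/2 <= s < 1.
Hypothesis Hp : profile s phi.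
Hypothesis HD0 : D O = phi.
Hypothesis HD : forall j x, derivable_pt_lim (D j) x (D (S j) x).

Definition gg (t : R) := phi t * phi t * (t * t * t).
Definition G1 (t : R) := 2 * phi t * D 1%nat t * (t * t * t) + 3 * (phi t * phi t) * (t * t).
Definition G2 (t : R) := 2 * (D 1%nat t * D 1%nat t * (t*t*t) + phi t * D 2%nat t * (t*t*t)
   + phi t * D 1%nat t * (3*(t*t))) + 3*(2*phi t * D 1%nat t * (t*t) + phi t * phi t * (2*t)).

Lemma dgg t : derivable_pt_lim gg t (G1 t).
Proof.
  unfold gg, G1. eapply dlim_val.
  apply dmul; [apply dmul; apply (dphi phi D HD0 HD)|apply dmul; [apply dmul|]; apply did].
  cbv beta; ring.
Qed.

Lemma dG1 t : derivable_pt_lim G1 t (G2 t).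
Proof.
  unfold G1, G2. eapply dlim_val.
  apply dplus.
  apply dmul; [apply dmul; [apply dscal; apply (dphi phi D HD0 HD)|apply HD]
             |apply dmul; [apply dmul|]; apply did].
  apply dmul; [apply dscal; apply dmul; apply (dphi phi D HD0 HD)|apply dmul; apply did].
  cbv beta; ring.
Qed.


Lemma G1_bound : exists C, 0 <= C /\ forall t, Rabs (G1 t) <= C * (phi t ^ 2 * t ^ 2).
Proof.
  destruct (D1_bound s phi D Hs Hp HD0 HD) as [c1 [Hc1 H1]].
  exists (2 * c1 + 3). split. lra. intro t.
  pose proof (phi_pos s phi Hp t) as HP. specialize (H1 t).
  set (P := phi t) in *. set (d1 := Rabs (D 1%nat t)) in *. set (r := Rabs t) in *.
  assert (Hr: 0 <= r) by apply Rabs_pos. assert (Hd: 0 <= d1) by apply Rabs_pos.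
  assert (E: Rabs (G1 t) <= 2*P*d1*(r*r*r) + 3*(P*P)*(r*r)).
  { unfold G1. eapply Rle_trans; [apply Rabs_triang|]. rewrite !Rabs_mult.
    rewrite (Rabs_pos_eq 2), (Rabs_pos_eq 3), (Rabs_pos_eq (phi t)) by (try lra; left; exact HP).
    apply Req_le; unfold P, d1, r; ring. }
  assert (Et: t ^ 2 = r * r) by (unfold r; rewrite <- pow2_abs; ring).
  rewrite Et.
  assert (2*P*(r*r)*(d1*r) <= 2*P*(r*r)*(c1*P)) by (apply Rmult_le_compat_l; [|exact H1]; nra).
  nra.
Qed.

Lemma G2_bound : exists C, 0 <= C /\ forall t, Rabs (G2 t) <= C * (phi t ^ 2 * Rabs t).
Proof.
  destruct (D1_bound s phi D Hs Hp HD0 HD) as [c1 [Hc1 H1]].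
  destruct (D2_bound s phi D Hs Hp HD0 HD) as [c2 [Hc2 H2]].
  exists (2 * c1 * c1 + 2 * c2 + 12 * c1 + 6). split. nra. intro t.
  pose proof (phi_pos s phi Hp t) as HP. specialize (H1 t). specialize (H2 t).
  set (P := phi t) in *. set (d1 := Rabs (D 1%nat t)) in *. set (d2 := Rabs (D 2%nat t)) in *.
  set (r := Rabs t) in *.
  assert (Hr: 0 <= r) by apply Rabs_pos. assert (Hd: 0 <= d1) by apply Rabs_pos.
  assert (Hd2: 0 <= d2) by apply Rabs_pos.
  assert (Et: t ^ 2 = r * r) by (unfold r; rewrite <- pow2_abs; ring).
  rewrite Et in H2.
  assert (E: Rabs (G2 t) <= 2 * (d1*d1*(r*r*r) + P*d2*(r*r*r) + P*d1*(3*(r*r))) + 3*(2*P*d1*(r*r) + P*P*(2*r))).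
  { unfold G2. eapply Rle_trans; [apply Rabs_triang|]. rewrite !Rabs_mult.
    rewrite (Rabs_pos_eq 2), (Rabs_pos_eq 3) by lra.
    apply Rplus_le_compat; apply Rmult_le_compat_l; try lra;
    repeat (eapply Rle_trans; [apply Rabs_triang|apply Rplus_le_compat]);
    rewrite ?Rabs_mult, ?(Rabs_pos_eq 2), ?(Rabs_pos_eq 3), ?(Rabs_pos_eq (phi t)) by (try lra; left; exact HP);
    apply Req_le; unfold P, d1, d2, r; ring. }
  assert (A1: d1*d1*(r*r*r) <= c1*c1*(P*P)*r).
  { assert (d1*r*(d1*r) <= c1*P*(c1*P)) by (apply Rmult_le_compat; nra). nra. }
  assert (A2: P*d2*(r*r*r) <= c2*(P*P)*r).
  { assert (P*r*(d2*(r*r)) <= P*r*(c2*P)) by (apply Rmult_le_compat_l; nra). nra. }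
  assert (A3: P*d1*(r*r) <= c1*(P*P)*r).
  { assert (P*r*(d1*r) <= P*r*(c1*P)) by (apply Rmult_le_compat_l; nra). nra. }
  nra.
Qed.


Lemma mono_R c R : Rabs c <= R -> phi c ^ 2 * Rabs c <= 8 * (phi R ^ 2 * R).
Proof.
  intro H. assert (0 <= R) by (pose proof (Rabs_pos c); lra).
  rewrite <- (Rabs_pos_eq R) at 2 by lra. apply (mono8 s phi Hs Hp). rewrite (Rabs_pos_eq R); lra.
Qed.

Lemma gg_lip : exists C, 0 <= C /\ forall u v R, Rabs u <= R -> Rabs v <= R ->
  Rabs (gg u - gg v) <= C * (phi R ^ 2 * R ^ 2) * Rabs (u - v).
Proof.
  destruct G1_bound as [C [HC HG]]. exists (8 * C). split. lra.
  intros u v R Hu Hv.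
  destruct (MVT_gen gg G1 v u dgg) as [c [Hc E]]. rewrite E, Rabs_mult.
  pose proof (between_abs v u c R Hc Hv Hu) as Hcr.
  apply Rmult_le_compat_r. apply Rabs_pos.
  eapply Rle_trans. apply HG.
  pose proof (mono_R c R Hcr). pose proof (Rabs_pos c).
  assert (c ^ 2 = Rabs c * Rabs c) by (rewrite <- pow2_abs; ring).
  assert (0 <= phi c ^ 2) by (apply pow2_ge_0).
  assert (phi c ^ 2 * Rabs c * Rabs c <= 8 * (phi R ^ 2 * R) * R).
  { apply Rmult_le_compat; try nra. }
  rewrite H1. replace (8 * C * (phi R ^ 2 * R ^ 2)) with (C * (8 * (phi R ^ 2 * R) * R)) by ring.
  apply Rmult_le_compat_l; [lra|]. replace (phi c ^ 2 * (Rabs c * Rabs c)) with (phi c ^ 2 * Rabs c * Rabs c) by ring. exact H3.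
Qed.

Lemma shift_deriv f f' a t : (forall x, derivable_pt_lim f x (f' x)) ->
  derivable_pt_lim (fun x => f (x + a)) t (f' (t + a)).
Proof.
  intro Hf.
  assert (H1: derivable_pt_lim (fun x => x + a) t 1).
  { eapply dlim_val. apply dplus; [apply did|apply dconst]. ring. }
  pose proof (derivable_pt_lim_comp (fun x => x + a) f t 1 (f' (t + a)) H1 (Hf _)).
  rewrite Rmult_1_r in H. exact H.
Qed.

Lemma gg_dd : exists C, 0 <= C /\ forall u v sg R, Rabs u <= R -> Rabs v <= R ->
  Rabs (u + sg) <= R -> Rabs (v + sg) <= R ->
  Rabs (gg (u + sg) - gg u - gg (v + sg) + gg v) <= C * (phi R ^ 2 * R) * Rabs sg * Rabs (u - v).
Proof.
  destruct G2_bound as [C [HC HG]]. exists (8 * C). split. lra.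
  intros u v sg R Hu Hv Hus Hvs.
  set (h := fun x => gg (x + sg) - gg x).
  assert (Hh: forall x, derivable_pt_lim h x (G1 (x + sg) - G1 x)).
  { intro x. apply dminus. apply (shift_deriv gg G1 sg x dgg). apply dgg. }
  destruct (MVT_gen h (fun x => G1 (x + sg) - G1 x) v u Hh) as [c [Hc E]].
  replace (gg (u + sg) - gg u - gg (v + sg) + gg v) with (h u - h v) by (unfold h; ring).
  rewrite E.
  pose proof (between_abs v u c R Hc Hv Hu) as Hcr.
  assert (Hcs: Rabs (c + sg) <= R).
  { apply (between_abs (v + sg) (u + sg)); auto. unfold Rmin, Rmax in *.
    destruct (Rle_dec v u), (Rle_dec (v + sg) (u + sg)); lra. }
  destruct (MVT_gen G1 G2 c (c + sg) (dG1)) as [c' [Hc' E']].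
  rewrite E'. replace (c + sg - c) with sg by ring.
  pose proof (between_abs c (c + sg) c' R Hc' Hcr Hcs) as Hc'r.
  rewrite !Rabs_mult.
  pose proof (mono_R c' R Hc'r). specialize (HG c').
  assert (Rabs (G2 c') <= 8 * C * (phi R ^ 2 * R)) by nra.
  pose proof (Rabs_pos sg). pose proof (Rabs_pos (u - v)).
  apply Rmult_le_compat_r; [lra|]. apply Rmult_le_compat_r; lra.
Qed.

End GBounds.

Section Core.
Variables (m f : R -> R) (N K C0 C1 C2 : R).
Hypothesis HN : 1 <= N.
Hypothesis HK : 1 <= K.
Hypothesis HC0 : 12 * K ^ 2 <= C0.
Hypothesis HC1 : 0 <= C1.
Hypothesis HC2 : 0 <= C2.
Hypothesis Hm0 : forall x, 0 < m x.
Hypothesis Hm1 : forall x, m x <= 1.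
Hypothesis Hmeq : forall x, Rabs x <= N -> m x = 1.
Hypothesis Hmabs : forall x, m (Rabs x) = m x.
Hypothesis Hmmono : forall x y, Rabs x <= Rabs y -> m y <= m x.
Hypothesis Hf : forall x, f x = m x ^ 2 * x ^ 3.
Hypothesis Hmono8 : forall x z, Rabs x <= Rabs z -> m x ^ 2 * Rabs x <= 8 * (m z ^ 2 * Rabs z).
Hypothesis Hlip : forall u v R, Rabs u <= R -> Rabs v <= R ->
  Rabs (f u - f v) <= C1 * (m R ^ 2 * R ^ 2) * Rabs (u - v).
Hypothesis Hdd : forall u v sg R, Rabs u <= R -> Rabs v <= R ->
  Rabs (u + sg) <= R -> Rabs (v + sg) <= R ->
  Rabs (f (u + sg) - f u - f (v + sg) + f v) <= C2 * (m R ^ 2 * R) * Rabs sg * Rabs (u - v).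

Lemma f_odd x : f (- x) = - f x.
Proof.
  rewrite !Hf. rewrite <- (Hmabs (- x)), Rabs_Ropp, Hmabs. ring.
Qed.

Lemma fbound x z : Rabs x <= Rabs z -> Rabs (f x) <= 8 * m z ^ 2 * Rabs z * x ^ 2.
Proof.
  intro H. rewrite Hf, Rabs_mult, (Rabs_pos_eq (m x ^ 2)) by (apply pow2_ge_0).
  rewrite <- (RPow_abs x 3).
  pose proof (Hmono8 x z H). pose proof (Rabs_pos x).
  rewrite <- (pow2_abs x). 
  assert (m x ^ 2 * Rabs x * (Rabs x * Rabs x) <= 8 * (m z ^ 2 * Rabs z) * (Rabs x * Rabs x))
    by (apply Rmult_le_compat_r; nra).
  replace (Rabs x ^ 3) with (Rabs x * (Rabs x * Rabs x)) by ring. nra.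
Qed.


Lemma abs_tri3 a b c : Rabs (a + b + c) <= Rabs a + Rabs b + Rabs c.
Proof.
  eapply Rle_trans; [apply Rabs_triang|]. pose proof (Rabs_triang a b). lra.
Qed.

Lemma quad x y z w R : Rabs x <= R -> Rabs y <= R -> Rabs z <= R -> Rabs w <= R ->
  Rabs (x + y + z + w) <= R ->
  Rabs (f x + f y + f z + f w) <=
    2 * C2 * m R ^ 2 * R * Rabs (x + y) * (Rabs (x + w) + Rabs (x + y + z + w))
    + 4 * C1 * m R ^ 2 * R ^ 2 * Rabs (x + y + z + w).
Proof.
  intros Hx Hy Hz Hw Ht.
  set (t := x + y + z + w) in *. set (sg := x + y).
  assert (HR: 0 <= R) by (pose proof (Rabs_pos x); lra).
  assert (Hm2: m (2 * R) <= m R) by (apply Hmmono; rewrite !Rabs_pos_eq; lra).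
  assert (Hm2' : m (2 * R) ^ 2 <= m R ^ 2) by (pose proof (Hm0 (2*R)); nra).
  assert (E: f x + f y + f z + f w =
     - (f (z + sg) - f z - f (- y + sg) + f (- y)) - (f (z + sg - t) - f (z + sg))).
  { replace (- y + sg) with x by (unfold sg; ring).
    replace (z + sg - t) with (- w) by (unfold sg, t; ring).
    rewrite !f_odd. ring. }
  rewrite E.
  assert (A1: Rabs (f (z + sg) - f z - f (- y + sg) + f (- y)) <=
     C2 * (m (2*R) ^ 2 * (2*R)) * Rabs sg * Rabs (z - - y)).
  { apply Hdd.
    - lra.
    - rewrite Rabs_Ropp; lra.
    - replace (z + sg) with (t - w) by (unfold t, sg; ring).
      eapply Rle_trans; [apply Rabs_triang|]. rewrite Rabs_Ropp. lra.
    - replace (- y + sg) with x by (unfold sg; ring). lra. }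
  assert (A2: Rabs (f (z + sg - t) - f (z + sg)) <=
     C1 * (m (2*R) ^ 2 * (2*R) ^ 2) * Rabs (z + sg - t - (z + sg))).
  { apply Hlip.
    - replace (z + sg - t) with (- w) by (unfold sg, t; ring). rewrite Rabs_Ropp; lra.
    - replace (z + sg) with (t - w) by (unfold t, sg; ring).
      eapply Rle_trans; [apply Rabs_triang|]. rewrite Rabs_Ropp. lra. }
  replace (z + sg - t - (z + sg)) with (- t) in A2 by ring. rewrite Rabs_Ropp in A2.
  assert (A3: Rabs (z - - y) <= Rabs (x + w) + Rabs t).
  { replace (z - - y) with (t - (x + w)) by (unfold t; ring).
    eapply Rle_trans; [apply Rabs_triang|]. rewrite Rabs_Ropp. lra. }
  pose proof (Rabs_pos sg). pose proof (Rabs_pos t). pose proof (Rabs_pos (z - - y)).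
  pose proof (Rabs_pos (x + w)).
  assert (B1: C2 * (m (2*R) ^ 2 * (2*R)) * Rabs sg * Rabs (z - - y) <=
              2 * C2 * m R ^ 2 * R * Rabs sg * (Rabs (x + w) + Rabs t)).
  { replace (C2 * (m (2*R) ^ 2 * (2*R)) * Rabs sg * Rabs (z - - y)) with
       ((2 * C2 * R * Rabs sg) * (m (2*R) ^ 2 * Rabs (z - - y))) by ring.
    replace (2 * C2 * m R ^ 2 * R * Rabs sg * (Rabs (x + w) + Rabs t)) with
       ((2 * C2 * R * Rabs sg) * (m R ^ 2 * (Rabs (x + w) + Rabs t))) by ring.
    apply Rmult_le_compat_l. repeat apply Rmult_le_pos; lra. apply Rmult_le_compat; try lra. apply pow2_ge_0. }
  assert (B2: C1 * (m (2*R) ^ 2 * (2*R) ^ 2) * Rabs t <= 4 * C1 * m R ^ 2 * R ^ 2 * Rabs t).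
  { replace (C1 * (m (2*R) ^ 2 * (2*R) ^ 2) * Rabs t) with ((4 * C1 * R^2 * Rabs t) * m (2*R) ^ 2) by ring.
    replace (4 * C1 * m R ^ 2 * R ^ 2 * Rabs t) with ((4 * C1 * R^2 * Rabs t) * m R ^ 2) by ring.
    apply Rmult_le_compat_l; [|exact Hm2']. pose proof (pow2_ge_0 R). repeat apply Rmult_le_pos; lra. }
  match goal with |- Rabs (- ?P - ?Q) <= _ =>
    assert (Rabs (- P - Q) <= Rabs P + Rabs Q) by
      (unfold Rminus; eapply Rle_trans; [apply Rabs_triang|]; rewrite !Rabs_Ropp; lra) end.
  lra.
Qed.


Lemma nll A B : 0 < C0 -> ~ ll C0 A B -> B < C0 * A.
Proof.
  intros H0 H. unfold ll in H. apply Rnot_le_lt in H.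
  replace B with (C0 * (B / C0)) by (field; lra). apply Rmult_lt_compat_l; lra.
Qed.

Lemma yll A B : 0 < C0 -> ll C0 A B -> C0 * A <= B.
Proof.
  intros H0 H. unfold ll in H.
  replace B with (C0 * (B / C0)) by (field; lra). apply Rmult_le_compat_l; lra.
Qed.

Lemma C0pos : 12 <= C0.
Proof. nra. Qed.

Ltac pos := repeat (apply Rmult_le_pos || apply Rplus_le_le_0_compat);
  try first [lra | apply Rabs_pos | apply pow2_ge_0 | (left; apply Hm0)].

Lemma finish_quad S P Q tt mu a1 a5 :
  0 <= mu -> 0 <= a1 -> 0 <= P -> P <= 2 * a1 -> 0 <= Q -> 0 <= tt -> tt <= 2 * a5 ->
  P * Q <= 2 * C0 * a5 * a1 ->
  S <= 2 * C2 * mu * a1 * P * (Q + tt) + 4 * C1 * mu * a1 ^ 2 * tt ->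
  S <= (4 * C0 * C2 + 8 * C2 + 8 * C1) * (mu * a1 ^ 2 * a5).
Proof.
  intros Hmu Ha1 HP HP2 HQ Ht Ht2 HPQ HS.
  assert (A: 2 * C2 * mu * a1 * (P * Q) <= 2 * C2 * mu * a1 * (2 * C0 * a5 * a1))
    by (apply Rmult_le_compat_l; [pos|exact HPQ]).
  assert (B: P * tt <= (2 * a1) * (2 * a5)) by (apply Rmult_le_compat; lra).
  assert (B': 2 * C2 * mu * a1 * (P * tt) <= 2 * C2 * mu * a1 * ((2 * a1) * (2 * a5)))
    by (apply Rmult_le_compat_l; [pos|exact B]).
  assert (Cc: 4 * C1 * mu * a1 ^ 2 * tt <= 4 * C1 * mu * a1 ^ 2 * (2 * a5))
    by (apply Rmult_le_compat_l; [pos|exact Ht2]).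
  lra.
Qed.

Section Six.
Variables X1 X2 X3 X4 X5 X6 : R.
Hypothesis O12 : Rabs X2 <= Rabs X1.
Hypothesis O23 : Rabs X3 <= Rabs X2.
Hypothesis O34 : Rabs X4 <= Rabs X3.
Hypothesis O45 : Rabs X5 <= Rabs X4.
Hypothesis O56 : Rabs X6 <= Rabs X5.
Hypothesis Hsum : X1 + X2 + X3 + X4 + X5 + X6 = 0.

Lemma abs6 a b c d e g : Rabs (a + b + c + d + e + g) <=
  Rabs (a + b) + Rabs c + Rabs d + Rabs e + Rabs g.
Proof.
  repeat (eapply Rle_trans; [apply Rabs_triang|apply Rplus_le_compat_r]). apply Rle_refl.
Qed.

Lemma abs2 a b : Rabs (a + b) <= Rabs a + Rabs b.
Proof. apply Rabs_triang. Qed.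

Lemma part1 : ~ (ll C0 (Rabs X3) (Rabs X1) /\ ll C0 (Rabs X3 ^ 2) (Rabs (X1 + X2) * Rabs X1)) ->
  Rabs (f X1 + f X2 + f X3 + f X4 + f X5 + f X6) <=
   (48 * C0 ^ 2 + C1 * C0 + 32) * (m X1 ^ 2 * Rabs X1 * Rabs X3 ^ 2).
Proof.
  intro Hc.
  pose proof C0pos as HC0p.
  set (a1 := Rabs X1) in *. set (a3 := Rabs X3) in *. set (mu := m X1 ^ 2).
  assert (Hmu: 0 <= mu) by apply pow2_ge_0.
  assert (Ha3: 0 <= a3) by apply Rabs_pos.
  assert (F: forall x, Rabs x <= a3 -> Rabs (f x) <= 8 * mu * a1 * a3 ^ 2).
  { intros x Hx. eapply Rle_trans. apply (fbound x X1). fold a1. lra. fold a1.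
    rewrite <- (pow2_abs x). pose proof (Rabs_pos x).
    apply Rmult_le_compat_l. pos. nra. }
  pose proof (F X3 (Rle_refl _)). pose proof (F X4 ltac:(lra)). pose proof (F X5 ltac:(lra)).
  pose proof (F X6 ltac:(lra)).
  pose proof (abs6 (f X1) (f X2) (f X3) (f X4) (f X5) (f X6)).
  apply not_and_or in Hc. destruct Hc as [Hc|Hc]; apply nll in Hc; try lra.
  -
    assert (G: forall x, Rabs x <= a1 -> Rabs (f x) <= 8 * mu * a1 * (C0 ^ 2 * a3 ^ 2)).
    { intros x Hx. eapply Rle_trans. apply (fbound x X1). exact Hx.
      fold a1. rewrite <- (pow2_abs x). pose proof (Rabs_pos x).
      apply Rmult_le_compat_l. pos.
      assert (Rabs x <= C0 * a3) by lra. nra. }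
    pose proof (G X1 ltac:(unfold a1, a3 in *; lra)). pose proof (G X2 ltac:(unfold a1, a3 in *; lra)).
    pose proof (G X3 ltac:(unfold a1, a3 in *; lra)). pose proof (G X4 ltac:(unfold a1, a3 in *; lra)).
    pose proof (G X5 ltac:(unfold a1, a3 in *; lra)). pose proof (G X6 ltac:(unfold a1, a3 in *; lra)).
    pose proof (abs2 (f X1) (f X2)).
    assert (0 <= C1 * C0 * (mu * a1 * a3 ^ 2)).
    { pos. }
    assert (0 <= mu * a1 * a3 ^ 2) by pos.
    lra.
  -
    assert (L: Rabs (f X1 + f X2) <= C1 * (mu * a1 ^ 2) * Rabs (X1 + X2)).
    { replace (f X1 + f X2) with (f X1 - f (- X2)) by (rewrite f_odd; ring).
      replace (X1 + X2) with (X1 - - X2) by ring.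
      unfold mu. rewrite <- (Hmabs X1). fold a1.
      apply Hlip. unfold a1 in *; lra. rewrite Rabs_Ropp; unfold a1 in *; lra. }
    assert (C1 * (mu * a1 ^ 2) * Rabs (X1 + X2) <= C1 * C0 * (mu * a1 * a3 ^ 2)).
    { replace (C1 * (mu * a1 ^ 2) * Rabs (X1 + X2)) with ((C1 * mu * a1) * (Rabs (X1 + X2) * a1)) by ring.
      replace (C1 * C0 * (mu * a1 * a3 ^ 2)) with ((C1 * mu * a1) * (C0 * a3 ^ 2)) by ring.
      apply Rmult_le_compat_l. pos. lra. }
    assert (0 <= C0 ^ 2 * (mu * a1 * a3 ^ 2)).
    { pos. }
    assert (0 <= mu * a1 * a3 ^ 2) by pos.
    pose proof (abs2 (f X1) (f X2)). lra.
Qed.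


Lemma part2 :
  ~ (sim K (Rabs X1) (Rabs X2) /\ lsim K N (Rabs X2) /\ ll C0 (Rabs X3) N /\
     sim K (Rabs X3) (Rabs X4) /\
     ll C0 (Rabs (X3 ^ 3 + X4 ^ 3 + X5 ^ 3 + X6 ^ 3)) (Rabs (X1 ^ 3 + X2 ^ 3))) ->
  (sim K (Rabs X1) (Rabs X2) /\ lsim K N (Rabs X2) /\ ll C0 (Rabs X3) N /\
     sim K (Rabs X3) (Rabs X4)) ->
  Rabs (f X1 + f X2 + f X3 + f X4 + f X5 + f X6) <=
   ((32 * C0 * (C1 + 3) + 8) * K) * (Rabs X3 * Rabs X4 * Rabs X5).
Proof.
  intros Hn Hh.
  assert (Hc: ~ ll C0 (Rabs (X3 ^ 3 + X4 ^ 3 + X5 ^ 3 + X6 ^ 3)) (Rabs (X1 ^ 3 + X2 ^ 3))) by tauto.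
  destruct Hh as [[S1 S2] [L2 [L3 [S3 S4]]]].
  pose proof C0pos as HC0p.
  apply nll in Hc; [|lra].
  unfold lsim in L2. apply yll in L3; [|lra]. unfold sim in *.
  set (sg := X1 + X2).
  set (T := X3 ^ 3 + X4 ^ 3 + X5 ^ 3 + X6 ^ 3) in *.
  pose proof (Rabs_pos X1). pose proof (Rabs_pos X2). pose proof (Rabs_pos X3).
  pose proof (Rabs_pos X4). pose proof (Rabs_pos X5). pose proof (Rabs_pos X6).
  pose proof (Rabs_pos sg).
  assert (Hsm: forall x, Rabs x <= Rabs X3 -> f x = x ^ 3).
  { intros x Hx. rewrite Hf, Hmeq. ring.
    assert (C0 * Rabs x <= N) by nra. nra. }
  assert (ET: f X3 + f X4 + f X5 + f X6 = T).
  { unfold T. rewrite !Hsm by lra. ring. }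
  assert (Lo: Rabs sg * Rabs X1 ^ 2 <= 2 * Rabs (X1 ^ 3 + X2 ^ 3)).
  { replace (X1 ^ 3 + X2 ^ 3) with (sg * (X1 ^ 2 - X1 * X2 + X2 ^ 2)) by (unfold sg; ring).
    rewrite Rabs_mult. rewrite (Rabs_pos_eq (X1 ^ 2 - X1 * X2 + X2 ^ 2)) by nra.
    rewrite pow2_abs. assert (X1 ^ 2 <= 2 * (X1 ^ 2 - X1 * X2 + X2 ^ 2)) by nra. nra. }
  assert (Up: Rabs T <= 3 * Rabs X3 ^ 2 * Rabs sg + 8 * Rabs X3 ^ 2 * Rabs X5).
  { assert (E: T = (X3 + X4) * (X3 ^ 2 - X3 * X4 + X4 ^ 2) + X5 ^ 3 + X6 ^ 3) by (unfold T; ring).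
    assert (Q0: 0 <= X3 ^ 2 - X3 * X4 + X4 ^ 2) by nra.
    assert (Q1: X3 ^ 2 - X3 * X4 + X4 ^ 2 <= 3 * Rabs X3 ^ 2).
    { rewrite <- (pow2_abs X3), <- (pow2_abs X4).
      assert (Rabs (X3 * X4) <= Rabs X3 ^ 2) by (rewrite Rabs_mult; nra).
      pose proof (Rle_abs (- (X3 * X4))). rewrite Rabs_Ropp in *.
      assert (X4 ^ 2 <= X3 ^ 2) by (rewrite <- (pow2_abs X3), <- (pow2_abs X4); nra).
      rewrite <- (pow2_abs X3), <- (pow2_abs X4) in H8. nra. }
    assert (S34: Rabs (X3 + X4) <= Rabs sg + 2 * Rabs X5).
    { replace (X3 + X4) with (- sg - X5 - X6) by (unfold sg; lra).
      unfold Rminus. eapply Rle_trans; [apply Rabs_triang|].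
      pose proof (Rabs_triang (- sg) (- X5)). rewrite !Rabs_Ropp in *. lra. }
    assert (C5: Rabs (X5 ^ 3) <= Rabs X3 ^ 2 * Rabs X5).
    { rewrite <- RPow_abs. assert (Rabs X5 * Rabs X5 <= Rabs X3 * Rabs X3) by nra. nra. }
    assert (C6: Rabs (X6 ^ 3) <= Rabs X3 ^ 2 * Rabs X5).
    { rewrite <- RPow_abs. assert (Rabs X6 * Rabs X6 <= Rabs X3 * Rabs X3) by nra. nra. }
    rewrite E. eapply Rle_trans. apply abs_tri3. rewrite Rabs_mult, (Rabs_pos_eq _ Q0).
    assert (Rabs (X3 + X4) * (X3 ^ 2 - X3 * X4 + X4 ^ 2) <= (Rabs sg + 2 * Rabs X5) * (3 * Rabs X3 ^ 2))
      by (apply Rmult_le_compat; try lra; apply Rabs_pos).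
    lra. }
  assert (Sm: 12 * (C0 * Rabs X3 ^ 2) <= Rabs X1 ^ 2).
  { assert (C0 * Rabs X3 <= K * Rabs X1) by nra.
    assert ((C0 * Rabs X3) * (C0 * Rabs X3) <= (K * Rabs X1) * (K * Rabs X1))
      by (apply Rmult_le_compat; pos).
    assert (12 * K ^ 2 * Rabs X1 ^ 2 <= C0 * Rabs X1 ^ 2)
      by (apply Rmult_le_compat_r; pos).
    apply (Rmult_le_reg_l C0). lra. nra. }
  assert (Key: Rabs sg * Rabs X1 ^ 2 <= 32 * C0 * (Rabs X3 ^ 2 * Rabs X5)).
  { assert (Rabs sg * Rabs X1 ^ 2 <= 2 * C0 * Rabs T) by nra.
    assert (C0 * Rabs X3 ^ 2 * Rabs sg <= Rabs X1 ^ 2 * Rabs sg / 12).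
    { pose proof (Rmult_le_compat_r (Rabs sg) _ _ (Rabs_pos sg) Sm). lra. }
    nra. }
  assert (L: Rabs (f X1 + f X2) <= C1 * (m X1 ^ 2 * Rabs X1 ^ 2) * Rabs sg).
  { replace (f X1 + f X2) with (f X1 - f (- X2)) by (rewrite f_odd; ring).
    replace sg with (X1 - - X2) by (unfold sg; ring).
    rewrite <- (Hmabs X1).
    apply Hlip. lra. rewrite Rabs_Ropp; lra. }
  assert (Hmu: m X1 ^ 2 <= 1) by (pose proof (Hm0 X1); pose proof (Hm1 X1); nra).
  assert (L': Rabs (f X1 + f X2) <= C1 * (Rabs X1 ^ 2 * Rabs sg)).
  { eapply Rle_trans. exact L. 
    replace (C1 * (m X1 ^ 2 * Rabs X1 ^ 2) * Rabs sg) with (C1 * (Rabs X1 ^ 2 * Rabs sg) * m X1 ^ 2) by ring.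
    replace (C1 * (Rabs X1 ^ 2 * Rabs sg)) with (C1 * (Rabs X1 ^ 2 * Rabs sg) * 1) at 2 by ring.
    apply Rmult_le_compat_l; [pos|exact Hmu]. }
  replace (f X1 + f X2 + f X3 + f X4 + f X5 + f X6) with ((f X1 + f X2) + T) by (rewrite <- ET; ring).
  eapply Rle_trans. apply Rabs_triang.
  assert (Rabs X3 ^ 2 <= Rabs X1 ^ 2) by (apply pow_incr; lra).
  assert (Rabs X3 ^ 2 * Rabs sg <= Rabs X1 ^ 2 * Rabs sg) by (apply Rmult_le_compat_r; lra).
  assert (C1 * (Rabs X1 ^ 2 * Rabs sg) <= C1 * (32 * C0 * (Rabs X3 ^ 2 * Rabs X5))).
  { apply Rmult_le_compat_l. lra. lra. }
  assert (Rabs X3 ^ 2 * Rabs X5 <= K * (Rabs X3 * Rabs X4 * Rabs X5)).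
  { replace (Rabs X3 ^ 2 * Rabs X5) with (Rabs X3 * Rabs X5 * Rabs X3) by ring.
    replace (K * (Rabs X3 * Rabs X4 * Rabs X5)) with (Rabs X3 * Rabs X5 * (K * Rabs X4)) by ring.
    apply Rmult_le_compat_l. pos. lra. }
  assert (0 <= Rabs X3 ^ 2 * Rabs X5) by pos.
  assert (0 <= C0 * C1 * (Rabs X3 ^ 2 * Rabs X5)) by pos.
  assert (0 <= C0 * (Rabs X3 ^ 2 * Rabs X5)) by pos.
  assert ((32 * C0 * (C1 + 3) + 8) * (Rabs X3 ^ 2 * Rabs X5) <=
          (32 * C0 * (C1 + 3) + 8) * (K * (Rabs X3 * Rabs X4 * Rabs X5)))
    by (apply Rmult_le_compat_l; [pos|lra]).
  assert (Rabs sg * Rabs X1 ^ 2 = Rabs X1 ^ 2 * Rabs sg) by ring.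
  lra.
Qed.


Lemma part3 : ll C0 (Rabs X5) (Rabs X4) ->
  ~ (ll C0 (Rabs X5) (Rabs X4) /\
     ll C0 (Rabs X5 * Rabs X1 ^ 2) (Rabs (X1 + X2) * Rabs (X1 + X3) * Rabs (X1 + X4)) /\
     ll C0 (Rabs (m X5 ^ 2 * X5 ^ 3 + m X6 ^ 2 * X6 ^ 3))
       (Rabs (m X1 ^ 2 * X1 ^ 3 + m X2 ^ 2 * X2 ^ 3 + m X3 ^ 2 * X3 ^ 3 + m X4 ^ 2 * X4 ^ 3))) ->
  Rabs (f X1 + f X2 + f X3 + f X4 + f X5 + f X6) <=
   (16 * (C0 + 1) + 16 + 256 + (4 * C0 * C2 + 8 * C2 + 8 * C1)) * (m X1 ^ 2 * Rabs X1 ^ 2 * Rabs X5).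
Proof.
  intros H5 Hn. rewrite <- !Hf in Hn.
  pose proof C0pos as HC0p.
  set (mu := m X1 ^ 2).
  assert (Hmu: 0 <= mu) by apply pow2_ge_0.
  pose proof (Rabs_pos X1). pose proof (Rabs_pos X2). pose proof (Rabs_pos X3).
  pose proof (Rabs_pos X4). pose proof (Rabs_pos X5). pose proof (Rabs_pos X6).
  assert (F: forall x, Rabs x <= Rabs X5 -> Rabs (f x) <= 8 * mu * Rabs X1 ^ 2 * Rabs X5).
  { intros x Hx. eapply Rle_trans. apply (fbound x X1). lra. fold mu.
    rewrite <- (pow2_abs x). pose proof (Rabs_pos x).
    assert (Rabs x * Rabs x <= Rabs X1 * Rabs X5) by (apply Rmult_le_compat; lra).
    replace (8 * mu * Rabs X1 ^ 2 * Rabs X5) with (8 * mu * Rabs X1 * (Rabs X1 * Rabs X5)) by ring.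
    apply Rmult_le_compat_l. pos. nra. }
  pose proof (F X5 (Rle_refl _)) as F5. pose proof (F X6 O56) as F6.
  set (S4 := f X1 + f X2 + f X3 + f X4).
  assert (Tot: Rabs (S4 + f X5 + f X6) <= Rabs S4 + Rabs (f X5) + Rabs (f X6)).
  { eapply Rle_trans; [apply Rabs_triang|]. pose proof (Rabs_triang S4 (f X5)). lra. }
  assert (P0: 0 <= mu * Rabs X1 ^ 2 * Rabs X5) by pos.
  assert (HQ: 0 <= 4 * C0 * C2 + 8 * C2 + 8 * C1) by pos.
  assert (HQP: 0 <= (4 * C0 * C2 + 8 * C2 + 8 * C1) * (mu * Rabs X1 ^ 2 * Rabs X5)) by (apply Rmult_le_pos; lra).
  assert (HCP: 0 <= C0 * (mu * Rabs X1 ^ 2 * Rabs X5)) by (apply Rmult_le_pos; lra).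
  apply not_and_or in Hn. destruct Hn as [Hn|Hn]; [tauto|].
  apply not_and_or in Hn. destruct Hn as [Hn|Hn].
  2:{
    apply nll in Hn; [|lra]. fold S4 in Hn.
    pose proof (Rabs_triang (f X5) (f X6)).
    assert (Rabs S4 <= C0 * (16 * (mu * Rabs X1 ^ 2 * Rabs X5))) by
      (eapply Rle_trans; [left; exact Hn|]; apply Rmult_le_compat_l; lra).
    lra. }
  apply nll in Hn; [|lra].
  destruct (Rle_lt_dec (Rabs X1) (8 * Rabs X5)) as [Hb|Hb].
  - assert (G: forall x, Rabs x <= Rabs X1 -> Rabs (f x) <= 64 * (mu * Rabs X1 ^ 2 * Rabs X5)).
    { intros x Hx. eapply Rle_trans. apply (fbound x X1). lra. fold mu.
      rewrite <- (pow2_abs x). pose proof (Rabs_pos x).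
      assert (Rabs x * Rabs x <= Rabs X1 * (8 * Rabs X5)) by (apply Rmult_le_compat; lra).
      replace (64 * (mu * Rabs X1 ^ 2 * Rabs X5)) with (8 * mu * Rabs X1 * (Rabs X1 * (8 * Rabs X5))) by ring.
      apply Rmult_le_compat_l. pos. nra. }
    pose proof (G X1 ltac:(lra)). pose proof (G X2 ltac:(lra)). pose proof (G X3 ltac:(lra)).
    pose proof (G X4 ltac:(lra)).
    assert (Rabs S4 <= Rabs (f X1) + Rabs (f X2) + Rabs (f X3) + Rabs (f X4)).
    { unfold S4. repeat (eapply Rle_trans; [apply Rabs_triang|apply Rplus_le_compat_r]). lra. }
    assert (0 <= C0 * (mu * Rabs X1 ^ 2 * Rabs X5)) by pos.
    lra.
  - set (tt := Rabs (X5 + X6)).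
    assert (Htt: tt <= 2 * Rabs X5) by (unfold tt; pose proof (Rabs_triang X5 X6); lra).
    assert (Htt0: 0 <= tt) by apply Rabs_pos.
    assert (Ha1: 0 < Rabs X1) by lra.
    assert (QB: Rabs S4 <= (4 * C0 * C2 + 8 * C2 + 8 * C1) * (mu * Rabs X1 ^ 2 * Rabs X5)).
    { assert (Sum3: Rabs X1 / 2 <= Rabs (X1 + X2) \/ Rabs X1 / 2 <= Rabs (X1 + X3) \/ Rabs X1 / 2 <= Rabs (X1 + X4)).
      { destruct (Rle_lt_dec (Rabs X1 / 2) (Rabs (X1 + X2))); [left; lra|].
        destruct (Rle_lt_dec (Rabs X1 / 2) (Rabs (X1 + X3))); [right; left; lra|].
        destruct (Rle_lt_dec (Rabs X1 / 2) (Rabs (X1 + X4))); [right; right; lra|].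
        exfalso.
        assert (E2: 2 * Rabs X1 = Rabs (X1 + X2 + (X1 + X3) + (X1 + X4) + (X5 + X6))).
        { replace (X1 + X2 + (X1 + X3) + (X1 + X4) + (X5 + X6)) with (2 * X1) by lra.
          rewrite Rabs_mult, (Rabs_pos_eq 2); lra. }
        pose proof (abs_tri3 (X1 + X2) (X1 + X3) (X1 + X4)).
        pose proof (Rabs_triang (X1 + X2 + (X1 + X3) + (X1 + X4)) (X5 + X6)) as Htr2.
        fold tt in Htr2. lra. }
      assert (Ht: Rabs (X1 + X2 + X3 + X4) = tt).
      { unfold tt. replace (X1 + X2 + X3 + X4) with (- (X5 + X6)) by lra. apply Rabs_Ropp. }
      assert (Htr: Rabs (X1 + X2 + X3 + X4) <= Rabs X1) by lra.
      pose proof (Rabs_pos (X1 + X2)). pose proof (Rabs_pos (X1 + X3)). pose proof (Rabs_pos (X1 + X4)).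
      assert (P2: forall a b, Rabs (a + b) <= 2 * Rabs X1 -> True) by auto.
      assert (B12: Rabs (X1 + X2) <= 2 * Rabs X1) by (pose proof (Rabs_triang X1 X2); lra).
      assert (B13: Rabs (X1 + X3) <= 2 * Rabs X1) by (pose proof (Rabs_triang X1 X3); lra).
      assert (Hmr: m (Rabs X1) ^ 2 = mu) by (unfold mu; rewrite Hmabs; reflexivity).
      destruct Sum3 as [Hs|[Hs|Hs]].
      - (* |s12| big: use pair (13,14) *)
        assert (PQ: Rabs (X1 + X3) * Rabs (X1 + X4) <= 2 * C0 * Rabs X5 * Rabs X1).
        { apply (Rmult_le_reg_l (Rabs X1 / 2)). lra.
          assert (Rabs X1 / 2 * (Rabs (X1 + X3) * Rabs (X1 + X4)) <=
                  Rabs (X1 + X2) * (Rabs (X1 + X3) * Rabs (X1 + X4)))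
            by (apply Rmult_le_compat_r; pos).
          nra. }
        pose proof (quad X1 X3 X2 X4 (Rabs X1) ltac:(lra) ltac:(lra) ltac:(lra) ltac:(lra)
           ltac:(replace (X1 + X3 + X2 + X4) with (X1 + X2 + X3 + X4) by ring; lra)) as Qd.
        replace (X1 + X3 + X2 + X4) with (X1 + X2 + X3 + X4) in Qd by ring.
        rewrite Ht, Hmr in Qd.
        replace (f X1 + f X3 + f X2 + f X4) with S4 in Qd by (unfold S4; ring).
        apply (finish_quad _ (Rabs (X1 + X3)) (Rabs (X1 + X4)) tt); auto; try lra.
        all: try (eapply Rle_trans; [exact Qd|]; apply Req_le; ring).
      - assert (PQ: Rabs (X1 + X2) * Rabs (X1 + X4) <= 2 * C0 * Rabs X5 * Rabs X1).
        { apply (Rmult_le_reg_l (Rabs X1 / 2)). lra.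
          assert (Rabs X1 / 2 * (Rabs (X1 + X2) * Rabs (X1 + X4)) <=
                  Rabs (X1 + X3) * (Rabs (X1 + X2) * Rabs (X1 + X4)))
            by (apply Rmult_le_compat_r; pos).
          nra. }
        pose proof (quad X1 X2 X3 X4 (Rabs X1) ltac:(lra) ltac:(lra) ltac:(lra) ltac:(lra)
           ltac:(lra)) as Qd.
        rewrite Ht, Hmr in Qd. fold S4 in Qd.
        apply (finish_quad _ (Rabs (X1 + X2)) (Rabs (X1 + X4)) tt); auto; try lra.
        all: try (eapply Rle_trans; [exact Qd|]; apply Req_le; ring).
      - assert (PQ: Rabs (X1 + X2) * Rabs (X1 + X3) <= 2 * C0 * Rabs X5 * Rabs X1).
        { apply (Rmult_le_reg_l (Rabs X1 / 2)). lra.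
          assert (Rabs X1 / 2 * (Rabs (X1 + X2) * Rabs (X1 + X3)) <=
                  Rabs (X1 + X4) * (Rabs (X1 + X2) * Rabs (X1 + X3)))
            by (apply Rmult_le_compat_r; pos).
          nra. }
        pose proof (quad X1 X2 X4 X3 (Rabs X1) ltac:(lra) ltac:(lra) ltac:(lra) ltac:(lra)
           ltac:(replace (X1 + X2 + X4 + X3) with (X1 + X2 + X3 + X4) by ring; lra)) as Qd.
        replace (X1 + X2 + X4 + X3) with (X1 + X2 + X3 + X4) in Qd by ring.
        rewrite Ht, Hmr in Qd.
        replace (f X1 + f X2 + f X4 + f X3) with S4 in Qd by (unfold S4; ring).
        apply (finish_quad _ (Rabs (X1 + X2)) (Rabs (X1 + X3)) tt); auto; try lra.
        all: try (eapply Rle_trans; [exact Qd|]; apply Req_le; ring). }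
    assert (Rabs X5 <= Rabs X1) by lra.
    assert (mu * Rabs X1 * Rabs X5 ^ 2 <= mu * Rabs X1 ^ 2 * Rabs X5) by (pose proof (Rmult_le_compat_l (mu * Rabs X1 * Rabs X5) _ _ ltac:(pos) H6); nra).
    lra.
Qed.

End Six.

Definition Cbig := (48 * C0 ^ 2 + C1 * C0 + 32) + ((32 * C0 * (C1 + 3) + 8) * K)
   + (16 * (C0 + 1) + 16 + 256 + (4 * C0 * C2 + 8 * C2 + 8 * C1)).

Lemma Cbig_pos : 0 < Cbig.
Proof. pose proof C0pos. unfold Cbig. assert (0 <= C1 * C0) by pos. assert (0 <= C0 * (C1 + 3)) by pos.
  assert (0 <= (32 * C0 * (C1 + 3) + 8) * K) by pos. assert (0 <= C0 * C2) by pos. nra. Qed.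

Lemma core_all X1 X2 X3 X4 X5 X6 :
  Rabs X2 <= Rabs X1 -> Rabs X3 <= Rabs X2 -> Rabs X4 <= Rabs X3 -> Rabs X5 <= Rabs X4 ->
  Rabs X6 <= Rabs X5 -> X1 + X2 + X3 + X4 + X5 + X6 = 0 ->
  ~ (sim K (Rabs X1) (Rabs X2) /\ lsim K N (Rabs X2) /\ ll C0 (Rabs X3) N /\
     sim K (Rabs X3) (Rabs X4) /\
     ll C0 (Rabs (X3 ^ 3 + X4 ^ 3 + X5 ^ 3 + X6 ^ 3)) (Rabs (X1 ^ 3 + X2 ^ 3))) ->
  ~ (ll C0 (Rabs X3) (Rabs X1) /\ ll C0 (Rabs X3 ^ 2) (Rabs (X1 + X2) * Rabs X1)) ->
  ~ (ll C0 (Rabs X5) (Rabs X4) /\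
     ll C0 (Rabs X5 * Rabs X1 ^ 2) (Rabs (X1 + X2) * Rabs (X1 + X3) * Rabs (X1 + X4)) /\
     ll C0 (Rabs (m X5 ^ 2 * X5 ^ 3 + m X6 ^ 2 * X6 ^ 3))
       (Rabs (m X1 ^ 2 * X1 ^ 3 + m X2 ^ 2 * X2 ^ 3 + m X3 ^ 2 * X3 ^ 3 + m X4 ^ 2 * X4 ^ 3))) ->
  Rabs (f X1 + f X2 + f X3 + f X4 + f X5 + f X6) <= Cbig * (m X1 ^ 2 * Rabs X1 * Rabs X3 ^ 2) /\
  ((sim K (Rabs X1) (Rabs X2) /\ lsim K N (Rabs X2) /\ ll C0 (Rabs X3) N /\
     sim K (Rabs X3) (Rabs X4)) ->
     Rabs (f X1 + f X2 + f X3 + f X4 + f X5 + f X6) <= Cbig * (Rabs X3 * Rabs X4 * Rabs X5)) /\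
  (ll C0 (Rabs X5) (Rabs X4) ->
     Rabs (f X1 + f X2 + f X3 + f X4 + f X5 + f X6) <= Cbig * (m X1 ^ 2 * Rabs X1 ^ 2 * Rabs X5)).
Proof.
  intros O12 O23 O34 O45 O56 Hs n2 n3 n4.
  pose proof C0pos.
  assert (P1: 0 <= C1 * C0) by pos. assert (P2: 0 <= C0 * (C1 + 3)) by pos.
  assert (P3: 0 <= (32 * C0 * (C1 + 3) + 8) * K) by pos. assert (P4: 0 <= C0 * C2) by pos.
  assert (A: 48 * C0 ^ 2 + C1 * C0 + 32 <= Cbig) by (unfold Cbig; nra).
  assert (B: (32 * C0 * (C1 + 3) + 8) * K <= Cbig) by (unfold Cbig; nra).
  assert (Cc: 16 * (C0 + 1) + 16 + 256 + (4 * C0 * C2 + 8 * C2 + 8 * C1) <= Cbig) by (unfold Cbig; nra).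
  split; [|split].
  - eapply Rle_trans. apply part1; auto. apply Rmult_le_compat_r; [pos|exact A].
  - intro Hh. eapply Rle_trans. apply part2; auto. apply Rmult_le_compat_r; [pos|exact B].
  - intro Hh. eapply Rle_trans. apply part3; auto. apply Rmult_le_compat_r; [pos|exact Cc].
Qed.

End Core.

Section Scale.
Variables (s : R) (phi : R -> R) (D : nat -> R -> R) (N : R).
Hypothesis Hs : 1/2 <= s < 1.
Hypothesis Hp : profile s phi.
Hypothesis HD0 : D O = phi.
Hypothesis HD : forall j x, derivable_pt_lim (D j) x (D (S j) x).
Hypothesis HN : 1 <= N.

Definition fN x := mult phi N x ^ 2 * x ^ 3.

Lemma abs_divN x : Rabs (x / N) = Rabs x / N.
Proof. unfold Rdiv. rewrite Rabs_mult, Rabs_inv, (Rabs_pos_eq N) by lra. reflexivity. Qed.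

Lemma fN_gg x : fN x = N ^ 3 * gg phi (x / N).
Proof. unfold fN, gg, mult. field. lra. Qed.

Lemma sm0 x : 0 < mult phi N x.
Proof. apply (phi_pos s phi Hp). Qed.
Lemma sm1 x : mult phi N x <= 1.
Proof. apply (phi_le1 s phi Hp). Qed.
Lemma smeq x : Rabs x <= N -> mult phi N x = 1.
Proof.
  intro H. unfold mult. destruct Hp as (_&_&_&H1&_). apply H1. rewrite abs_divN.
  apply (Rmult_le_reg_r N). lra. unfold Rdiv. rewrite Rmult_assoc, Rinv_l by lra. lra.
Qed.
Lemma smabs x : mult phi N (Rabs x) = mult phi N x.
Proof.
  unfold mult. rewrite <- (phi_abs s phi Hp (x / N)). rewrite abs_divN.
  rewrite <- (phi_abs s phi Hp (Rabs x / N)). rewrite abs_divN, Rabs_Rabsolu. reflexivity.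
Qed.
Lemma smmono x y : Rabs x <= Rabs y -> mult phi N y <= mult phi N x.
Proof.
  intro H. unfold mult. apply (phi_mono s phi Hp). rewrite !abs_divN.
  unfold Rdiv. apply Rmult_le_compat_r. left; apply Rinv_0_lt_compat; lra. exact H.
Qed.
Lemma smono8 x z : Rabs x <= Rabs z ->
  mult phi N x ^ 2 * Rabs x <= 8 * (mult phi N z ^ 2 * Rabs z).
Proof.
  intro H. unfold mult.
  assert (H1: Rabs (x / N) <= Rabs (z / N)).
  { rewrite !abs_divN. unfold Rdiv. apply Rmult_le_compat_r. left; apply Rinv_0_lt_compat; lra. exact H. }
  pose proof (mono8 s phi Hs Hp _ _ H1) as H2. rewrite !abs_divN in H2.
  apply (Rmult_le_reg_r (/ N)). apply Rinv_0_lt_compat; lra.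
  unfold Rdiv in H2. lra.
Qed.

Lemma slip C (HL : forall u v R, Rabs u <= R -> Rabs v <= R ->
  Rabs (gg phi u - gg phi v) <= C * (phi R ^ 2 * R ^ 2) * Rabs (u - v)) :
  forall u v R, Rabs u <= R -> Rabs v <= R ->
  Rabs (fN u - fN v) <= C * (mult phi N R ^ 2 * R ^ 2) * Rabs (u - v).
Proof.
  intros u v R Hu Hv.
  assert (HR: 0 <= R) by (pose proof (Rabs_pos u); lra).
  assert (Hu': Rabs (u / N) <= R / N) by (rewrite abs_divN; unfold Rdiv; apply Rmult_le_compat_r; [left; apply Rinv_0_lt_compat; lra|exact Hu]).
  assert (Hv': Rabs (v / N) <= R / N) by (rewrite abs_divN; unfold Rdiv; apply Rmult_le_compat_r; [left; apply Rinv_0_lt_compat; lra|exact Hv]).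
  specialize (HL _ _ _ Hu' Hv').
  rewrite !fN_gg. replace (N ^ 3 * gg phi (u / N) - N ^ 3 * gg phi (v / N))
    with (N ^ 3 * (gg phi (u / N) - gg phi (v / N))) by ring.
  rewrite Rabs_mult, (Rabs_pos_eq (N ^ 3)) by (apply pow_le; lra).
  replace (u / N - v / N) with ((u - v) / N) in HL by (field; lra).
  rewrite abs_divN in HL.
  apply (Rmult_le_compat_l (N ^ 3)) in HL; [|apply pow_le; lra].
  eapply Rle_trans; [exact HL|]. unfold mult. apply Req_le. field. lra.
Qed.

Lemma sdd C (HL : forall u v sg R, Rabs u <= R -> Rabs v <= R ->
  Rabs (u + sg) <= R -> Rabs (v + sg) <= R ->
  Rabs (gg phi (u + sg) - gg phi u - gg phi (v + sg) + gg phi v) <= C * (phi R ^ 2 * R) * Rabs sg * Rabs (u - v)) :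
  forall u v sg R, Rabs u <= R -> Rabs v <= R ->
  Rabs (u + sg) <= R -> Rabs (v + sg) <= R ->
  Rabs (fN (u + sg) - fN u - fN (v + sg) + fN v) <=
    C * (mult phi N R ^ 2 * R) * Rabs sg * Rabs (u - v).
Proof.
  intros u v sg R Hu Hv Hus Hvs.
  assert (Sc: forall x, Rabs x <= R -> Rabs (x / N) <= R / N).
  { intros x Hx. rewrite abs_divN; unfold Rdiv; apply Rmult_le_compat_r; [left; apply Rinv_0_lt_compat; lra|exact Hx]. }
  pose proof (Sc _ Hus) as Hus'. pose proof (Sc _ Hvs) as Hvs'.
  replace ((u + sg) / N) with (u / N + sg / N) in Hus' by (field; lra).
  replace ((v + sg) / N) with (v / N + sg / N) in Hvs' by (field; lra).
  specialize (HL _ _ _ _ (Sc _ Hu) (Sc _ Hv) Hus' Hvs').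
  rewrite !fN_gg.
  replace ((u + sg) / N) with (u / N + sg / N) by (field; lra).
  replace ((v + sg) / N) with (v / N + sg / N) by (field; lra).
  replace (N ^ 3 * gg phi (u / N + sg / N) - N ^ 3 * gg phi (u / N) - N ^ 3 * gg phi (v / N + sg / N) + N ^ 3 * gg phi (v / N))
    with (N ^ 3 * (gg phi (u / N + sg / N) - gg phi (u / N) - gg phi (v / N + sg / N) + gg phi (v / N))) by ring.
  rewrite Rabs_mult, (Rabs_pos_eq (N ^ 3)) by (apply pow_le; lra).
  replace (u / N - v / N) with ((u - v) / N) in HL by (field; lra).
  rewrite !abs_divN in HL.
  apply (Rmult_le_compat_l (N ^ 3)) in HL; [|apply pow_le; lra].
  eapply Rle_trans; [exact HL|]. unfold mult. apply Req_le. field. lra.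
Qed.

End Scale.

Lemma fold_shift (l : list R) a : fold_right Rplus a l = fold_right Rplus 0 l + a.
Proof. induction l; simpl; [ring|rewrite IHl; ring]. Qed.

Lemma sumR_list n h : sumR n h = fold_right Rplus 0 (map h (seq 0 n)).
Proof.
  induction n. reflexivity.
  rewrite seq_S, map_app, fold_right_app. simpl. rewrite fold_shift, IHn. ring.
Qed.

Lemma fold_perm (l l' : list R) : Permutation l l' -> fold_right Rplus 0 l = fold_right Rplus 0 l'.
Proof. induction 1; simpl; try lra. Qed.

Lemma sumR_perm n p h : (forall i, (i < n)%nat -> (p i < n)%nat) ->
  (forall i j, (i < n)%nat -> (j < n)%nat -> p i = p j -> i = j) ->
  sumR n (fun i => h (p i)) = sumR n h.
Proof.
  intros Hr Hi. rewrite !sumR_list.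
  replace (map (fun i => h (p i)) (seq 0 n)) with (map h (map p (seq 0 n))) by (rewrite map_map; reflexivity).
  apply fold_perm. apply Permutation_map.
  apply Permutation_map_same_l.
  - apply FinFun.Injective_map_NoDup_in; [|apply seq_NoDup].
    intros x y Hx Hy. apply in_seq in Hx. apply in_seq in Hy. apply Hi; lia.
  - intros z Hz. apply in_map_iff in Hz. destruct Hz as [x [<- Hx]]. apply in_seq in Hx.
    apply in_seq. specialize (Hr x). lia.
Qed.

Theorem mainTheorem3 :
  forall (k : nat), (k = 3%nat \/ k = 4%nat) ->
  forall (s : R), 1/2 <= s < 1 ->
  forall (phi : R -> R), profile s phi ->
  forall (K : R), 1 <= K ->
  exists C0min : R, 0 < C0min /\
  forall (C0 : R), C0min <= C0 ->
  exists C : R, 0 < C /\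
  forall (N lam : R), 1 <= N -> 1 <= lam ->
  forall (xi : nat -> R) (p : nat -> nat),
    in_Gamma (k + 2) lam xi ->
    sorting_perm (k + 2) xi p ->
    ~ Omega phi N K C0 (k + 2) xi p ->
    let X := xstar (k + 2) xi p in
    let a j := Rabs (X j) in
    let m1 := mult phi N (X 1%nat) in
    let M := Rabs (Msum phi N (k + 2) xi) in
    (* (1) *)
    M <= C * (m1 ^ 2 * a 1%nat * a 3%nat ^ 2) /\
    (* (2) *)
    ((sim K (a 1%nat) (a 2%nat) /\ lsim K N (a 2%nat) /\ ll C0 (a 3%nat) N /\
      sim K (a 3%nat) (a 4%nat)) ->
     M <= C * (a 3%nat * a 4%nat * a 5%nat)) /\
    (* (3) *)
    (ll C0 (a 5%nat) (a 4%nat) ->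
     M <= C * (m1 ^ 2 * a 1%nat ^ 2 * a 5%nat)).
Proof.
  intros k Hk s Hs phi Hp K HK.
  pose proof Hp as Hp'. destruct Hp' as [[D [HD0 HD]] _].
  destruct (gg_lip s phi D Hs Hp HD0 HD) as [C1 [HC1 HL1]].
  destruct (gg_dd s phi D Hs Hp HD0 HD) as [C2 [HC2 HL2]].
  exists (12 * K ^ 2). split. nra.
  intros C0 HC0. exists (Cbig K C0 C1 C2). split. apply Cbig_pos; auto.
  intros N lam HN Hlam xi p Hg Hsp HnO. cbv zeta.
  pose proof (core_all (mult phi N) (fN phi N) N K C0 C1 C2 HN HK HC0 HC1 HC2
    (sm0 s phi N Hp) (sm1 s phi N Hp) (smeq s phi N Hs Hp HN) (smabs s phi N Hp HN)
    (smmono s phi N Hp HN) (fun x => eq_refl) (smono8 s phi N Hs Hp HN)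
    (slip s phi N Hs HN C1 HL1) (sdd s phi N Hs HN C2 HL2)) as Core.
  destruct Hsp as [Hr [Hi Ho]].
  assert (EM: Msum phi N (k + 2) xi = sumR (k + 2) (fun j => fN phi N (xi (p j)))).
  { symmetry. apply (sumR_perm (k+2) p (fun j => fN phi N (xi j))); auto. }
  assert (ES: sumR (k + 2) (fun j => xi (p j)) = 0).
  { rewrite (sumR_perm (k+2) p xi); auto. apply Hg. }
  rewrite EM.
  unfold Omega, Omega1, Omega2, Omega3, Omega4 in HnO.
  destruct Hk as [-> | ->]; cbn [Nat.add Nat.sub sumR] in *.
  - change (xstar 5 xi p 1) with (xi (p 0%nat)) in *.
    change (xstar 5 xi p 2) with (xi (p 1%nat)) in *.
    change (xstar 5 xi p 3) with (xi (p 2%nat)) in *.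
    change (xstar 5 xi p 4) with (xi (p 3%nat)) in *.
    change (xstar 5 xi p 5) with (xi (p 4%nat)) in *.
    change (xstar 5 xi p 6) with 0 in *.
    change (xstar 5 xi p (0 + 3)) with (xi (p 2%nat)) in *.
    change (xstar 5 xi p (1 + 3)) with (xi (p 3%nat)) in *.
    change (xstar 5 xi p (2 + 3)) with (xi (p 4%nat)) in *.
    set (X1 := xi (p 0%nat)) in *. set (X2 := xi (p 1%nat)) in *. set (X3 := xi (p 2%nat)) in *.
    set (X4 := xi (p 3%nat)) in *. set (X5 := xi (p 4%nat)) in *.
    assert (F0: fN phi N 0 = 0) by (unfold fN; ring).
    replace (0 + fN phi N X1 + fN phi N X2 + fN phi N X3 + fN phi N X4 + fN phi N X5) with
      (fN phi N X1 + fN phi N X2 + fN phi N X3 + fN phi N X4 + fN phi N X5 + fN phi N 0)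
      by (rewrite F0; ring).
    apply (Core X1 X2 X3 X4 X5 0).
    + apply (Ho 0%nat 1%nat); lia.
    + apply (Ho 1%nat 2%nat); lia.
    + apply (Ho 2%nat 3%nat); lia.
    + apply (Ho 3%nat 4%nat); lia.
    + rewrite Rabs_R0. apply Rabs_pos.
    + lra.
    + intro H. apply HnO. right; left.
      destruct H as [A [B [Cc [Dd E]]]].
      split; [exact A|split;[exact B|split;[exact Cc|split;[exact Dd|]]]].
      replace (0 + X3 ^ 3 + X4 ^ 3 + X5 ^ 3) with (X3 ^ 3 + X4 ^ 3 + X5 ^ 3 + 0 ^ 3) by ring.
      exact E.
    + intro H. apply HnO. right; right; left. exact H.
    + intro H. apply HnO. right; right; right. exact H.
  - change (xstar 6 xi p 1) with (xi (p 0%nat)) in *.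
    change (xstar 6 xi p 2) with (xi (p 1%nat)) in *.
    change (xstar 6 xi p 3) with (xi (p 2%nat)) in *.
    change (xstar 6 xi p 4) with (xi (p 3%nat)) in *.
    change (xstar 6 xi p 5) with (xi (p 4%nat)) in *.
    change (xstar 6 xi p 6) with (xi (p 5%nat)) in *.
    change (xstar 6 xi p (0 + 3)) with (xi (p 2%nat)) in *.
    change (xstar 6 xi p (1 + 3)) with (xi (p 3%nat)) in *.
    change (xstar 6 xi p (2 + 3)) with (xi (p 4%nat)) in *.
    change (xstar 6 xi p (3 + 3)) with (xi (p 5%nat)) in *.
    set (X1 := xi (p 0%nat)) in *. set (X2 := xi (p 1%nat)) in *. set (X3 := xi (p 2%nat)) in *.
    set (X4 := xi (p 3%nat)) in *. set (X5 := xi (p 4%nat)) in *. set (X6 := xi (p 5%nat)) in *.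
    replace (0 + fN phi N X1 + fN phi N X2 + fN phi N X3 + fN phi N X4 + fN phi N X5 + fN phi N X6) with
      (fN phi N X1 + fN phi N X2 + fN phi N X3 + fN phi N X4 + fN phi N X5 + fN phi N X6)
      by ring.
    apply (Core X1 X2 X3 X4 X5 X6).
    + apply (Ho 0%nat 1%nat); lia.
    + apply (Ho 1%nat 2%nat); lia.
    + apply (Ho 2%nat 3%nat); lia.
    + apply (Ho 3%nat 4%nat); lia.
    + apply (Ho 4%nat 5%nat); lia.
    + lra.
    + intro H. apply HnO. right; left.
      destruct H as [A [B [Cc [Dd E]]]].
      split; [exact A|split;[exact B|split;[exact Cc|split;[exact Dd|]]]].
      replace (0 + X3 ^ 3 + X4 ^ 3 + X5 ^ 3 + X6 ^ 3) with (X3 ^ 3 + X4 ^ 3 + X5 ^ 3 + X6 ^ 3) by ring.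
      exact E.
    + intro H. apply HnO. right; right; left. exact H.
    + intro H. apply HnO. right; right; right. exact H.
Qed.
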